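(* Let $(\mathbf{s}_t,\mathbf{a}_t,\mathbf{s}_{t+k})\sim\mathcal{D}$ with real-valued action $\mathbf{a}_t$ of finite second moment, let $\overline{\mu}(s_t)=\mathbb{E}[\mathbf{a}_t\mid \mathbf{s}_t=s_t]$, $\overline{\xi}(s_t,s_{t+k})=\mathbb{E}[\mathbf{a}_t\mid \mathbf{s}_t=s_t,\mathbf{s}_{t+k}=s_{t+k}]$ and $$\Delta=\mathbb{E}_{\mathbf{s}_t}\Big[\mathrm{Var}_{\mathbf{s}_{t+k}\mid \mathbf{s}_t}\big(\mathbb{E}[\mathbf{a}_t\mid \mathbf{s}_t,\mathbf{s}_{t+k}]\big)\Big].$$ Let $\widehat{\mu}$ be an estimator of the BC policy obtained from a random dataset $\mathcal{D}_n$ and $\widehat{\xi}_{\widehat p}$ an estimator of the IDM policy obtained from a random dataset $\mathcal{D}_{\widehat p,m}$. Define $$\delta=\mathbb{E}_{\mathbf{s}_t}\big[\mathrm{Var}(\widehat{\mu}(\mathbf{s}_t))\big]-\mathbb{E}_{\mathbf{s}_t,\mathbf{s}_{t+k}}\big[\mathrm{Var}(\widehat{\xi}_{\widehat p}(\mathbf{s}_t,\mathbf{s}_{t+k}))\big],\qquad \beta=b_\mu^2(\widehat\mu)-b_\xi^2(\widehat\xi_{\widehat p}),$$ where the variances are over the randomness of the respective datasets and $$b_\mu^2(\widehat\mu)=\mathbb{E}_{\mathbf{s}_t}\Big[\big(\mathbb{E}_{\mathcal{D}_n}[\widehat\mu(\mathbf{s}_t)]-\overline{\mu}(\mathbf{s}_t)\big)^2\Big],\quad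 b_\xi^2(\widehat\xi_{\widehat p})=\mathbb{E}_{\mathbf{s}_t,\mathbf{s}_{t+k}}\Big[\big(\mathbb{E}_{\mathcal{D}_{\widehat p,m}}[\widehat\xi_{\widehat p}(\mathbf{s}_t,\mathbf{s}_{t+k})]-\overline{\xi}(\mathbf{s}_t,\mathbf{s}_{t+k})\big)^2\Big].$$ Then $$\widehat\Delta_{\widehat p}:=\mathrm{EPE}(\widehat\mu)-\mathrm{EPE}(\widehat\xi_{\widehat p})=\Delta+\delta+\beta.$$
   Context: Setting: an MDP with an unknown expert policy generating a data distribution $\mathcal{D}$ over tuples $(s_t,a_t,s_{t+k})$, where $s_{t+k}$ is the state $k\ge 1$ steps after $s_t$. $\widehat p(\cdot\mid s_t)$ is an approximate state predictor of the future state. The datasets are $\mathcal{D}_n=\{(s_t,a_t,s_{t+k})\stackrel{\text{i.i.d.}}{\sim}\mathcal{D}\}_{t=1}^n$ and $\mathcal{D}_{\widehat p,m}=\{(s_t,a_t,\widehat s_{t+k}) : (s_t,a_t)\stackrel{\text{i.i.d.}}{\sim}\mathcal{D},\ \widehat s_{t+k}\sim\widehat p(\cdot\mid s_t)\}_{t=1}^m$; $\mathbb{E}_{\mathcal{D}_n}$ and $\mathbb{E}_{\mathcal{D}_{\widehat p,m}}$ denote expectation over these random datasets, and the estimators are deterministic functions of their datasets, independent of the test sample. The expected prediction errors are $\mathrm{EPE}(\widehat\mu)=\mathbb{E}_{\mathbf{s}_t,\mathbf{a}_t,\mathcal{D}_n}[(\mathbf{a}_t-\widehat\mu(\mathbf{s}_t))^2]$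 and $\mathrm{EPE}(\widehat\xi_{\widehat p})=\mathbb{E}_{\mathbf{s}_t,\mathbf{a}_t,\mathbf{s}_{t+k},\mathcal{D}_{\widehat p,m}}[(\mathbf{a}_t-\widehat\xi_{\widehat p}(\mathbf{s}_t,\mathbf{s}_{t+k}))^2]$, where the test tuple $(\mathbf{s}_t,\mathbf{a}_t,\mathbf{s}_{t+k})\sim\mathcal{D}$ uses the ground-truth future state. *)

(* Defs.v *)
From HB Require Import structures.
From mathcomp Require Import all_boot all_order all_algebra.
From mathcomp Require Import all_classical all_reals all_analysis.
Set Implicit Arguments. Unset Strict Implicit. Unset Printing Implicit Defensive.
Import Order.TTheory GRing.Theory Num.Theory.
Import numFieldNormedType.Exports.
Local Open Scope classical_set_scope.
Local Open Scope ring_scope.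

Section Defs.
Context {R : realType}.

Definition Ex {d} {T : measurableType d} (P : probability T R) (f : T -> R) : R :=
  Rintegral P setT f.

Definition Var {d} {T : measurableType d} (P : probability T R) (f : T -> R) : R :=
  Ex P (fun w => (f w - Ex P f) ^+ 2).

Definition cond_exp_version {d} {Om : measurableType d} (P : probability Om R)
  {dT} {T : measurableType dT} (X : Om -> R) (Y : Om -> T) (g : T -> R) : Prop :=
  [/\ measurable_fun setT g,
      P.-integrable setT (fun w => (g (Y w))%:E) &
      forall h : T -> R, measurable_fun setT h ->
        (exists M : R, forall t, `|h t| <= M) ->
        (\int[P]_w (X w * h (Y w))%:E = \int[P]_w (g (Y w) * h (Y w))%:E)%E].

End Defs.

(* Main.v *)
Require Import Defs.
From HB Require Import structures.
From mathcomp Require Import all_boot all_order all_algebra.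
From mathcomp Require Import all_classical all_reals all_analysis.
From mathcomp Require Import measurable_realfun ring lra.
Import Order.TTheory GRing.Theory Num.Theory.
Import numFieldNormedType.Exports.
Local Open Scope classical_set_scope.
Local Open Scope ring_scope.

Set Implicit Arguments. Unset Strict Implicit. Unset Printing Implicit Defensive.

Section Basic.
Context {R : realType} {d : measure_display} {T : measurableType d}
  (P : probability T R).
Implicit Types (f g : T -> R) (a k r : R).

Definition L2 (f : T -> R) := measurable_fun setT f /\
  P.-integrable setT (fun x => (f x ^+ 2)%:E).
Definition I1 (f : T -> R) := P.-integrable setT (fun x => (f x)%:E).

Lemma I1_cst r : I1 (fun _ => r).
Proof. exact: (finite_measure_integrable_cst P r measurableT). Qed.

Lemma I1D f g : I1 f -> I1 g -> I1 (fun x => f x + g x).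
Proof.
move=> If Ig; rewrite /I1.
under eq_fun do rewrite EFinD.
exact: integrableD.
Qed.

Lemma I1N f : I1 f -> I1 (fun x => - f x).
Proof.
move=> If; rewrite /I1.
under eq_fun do rewrite EFinN.
exact: (integrableN If).
Qed.

Lemma I1B f g : I1 f -> I1 g -> I1 (fun x => f x - g x).
Proof. by move=> If Ig; apply: I1D => //; exact: I1N. Qed.

Lemma I1Z k f : I1 f -> I1 (fun x => k * f x).
Proof.
move=> If; rewrite /I1.
under eq_fun do rewrite EFinM.
exact: integrableZl.
Qed.

Lemma I1_le f g : measurable_fun setT f -> I1 g ->
  (forall x, `|f x| <= `|g x|) -> I1 f.
Proof.
move=> mf Ig fg; apply: (le_integrable measurableT _ _ Ig).
  exact/measurable_EFinP.
by move=> x _; rewrite !abse_EFin lee_fin fg.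
Qed.

Lemma L2_meas f : L2 f -> measurable_fun setT f.
Proof. by case. Qed.

Lemma L2_I1sq f : L2 f -> I1 (fun x => f x ^+ 2).
Proof. by case. Qed.

Lemma L2_I1 f : L2 f -> I1 f.
Proof.
move=> [mf If2]; apply: (I1_le (g := fun x => 1 + f x ^+ 2)) => //.
  exact: I1D (I1_cst 1) If2.
move=> x; rewrite [X in _ <= X]ger0_norm; last by rewrite addr_ge0 // sqr_ge0.
rewrite -real_normK ?num_real //.
have := sqr_ge0 (`|f x| - 1); nra.
Qed.

Lemma L2_mul f g : L2 f -> L2 g -> I1 (fun x => f x * g x).
Proof.
move=> [mf If2] [mg Ig2]; apply: (I1_le (g := fun x => f x ^+ 2 + g x ^+ 2)).
- exact: measurable_funM.
- exact: I1D.
move=> x; rewrite [X in _ <= X]ger0_norm; last by rewrite addr_ge0 // sqr_ge0.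
rewrite normrM -(real_normK (num_real (f x))) -(real_normK (num_real (g x))).
have := sqr_ge0 (`|f x| - `|g x|); nra.
Qed.

Lemma L2_cst r : L2 (fun _ => r).
Proof. split; first exact: measurable_cst. exact: I1_cst. Qed.

Lemma L2D f g : L2 f -> L2 g -> L2 (fun x => f x + g x).
Proof.
move=> Lf Lg; split; first exact: measurable_funD (L2_meas Lf) (L2_meas Lg).
apply: (I1_le (g := fun x => 2 * (f x ^+ 2) + 2 * (g x ^+ 2))).
- exact: measurable_funX (measurable_funD (L2_meas Lf) (L2_meas Lg)).
- by apply: I1D; apply: I1Z; apply: L2_I1sq.
move=> x; rewrite ger0_norm ?sqr_ge0 // ger0_norm; last first.
  by rewrite addr_ge0 // mulr_ge0 // sqr_ge0.
have := sqr_ge0 (f x - g x); nra.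
Qed.

Lemma L2Z k f : L2 f -> L2 (fun x => k * f x).
Proof.
move=> Lf; split; first exact: measurable_funM (measurable_cst _) (L2_meas Lf).
under eq_fun do rewrite exprMn.
exact: I1Z (L2_I1sq Lf).
Qed.

Lemma L2N f : L2 f -> L2 (fun x => - f x).
Proof.
move=> Lf; have := L2Z (-1) Lf; congr L2; apply: funext => x; by rewrite mulN1r.
Qed.

Lemma L2B f g : L2 f -> L2 g -> L2 (fun x => f x - g x).
Proof. by move=> Lf Lg; apply: L2D => //; exact: L2N. Qed.

Lemma ExD f g : I1 f -> I1 g -> Ex P (fun x => f x + g x) = Ex P f + Ex P g.
Proof. by move=> If Ig; rewrite /Ex RintegralD. Qed.

Lemma ExB f g : I1 f -> I1 g -> Ex P (fun x => f x - g x) = Ex P f - Ex P g.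
Proof. by move=> If Ig; rewrite /Ex RintegralB. Qed.

Lemma ExZ k f : I1 f -> Ex P (fun x => k * f x) = k * Ex P f.
Proof. by move=> If; rewrite /Ex RintegralZl. Qed.

Lemma Ex_cst r : Ex P (fun _ => r) = r.
Proof.
rewrite /Ex Rintegral_cst //.
transitivity (r * fine (1%E : \bar R)); last by rewrite mulr1.
congr (_ * fine _); exact: probability_setT.
Qed.

Lemma eq_Ex f g : f =1 g -> Ex P f = Ex P g.
Proof. by move=> fg; rewrite /Ex; apply: eq_Rintegral => x _; rewrite fg. Qed.

Lemma Ex_ge0 f : (forall x, 0 <= f x) -> 0 <= Ex P f.
Proof. by move=> f0; apply: Rintegral_ge0 => x _; exact: f0. Qed.

Lemma ExSq a f : L2 f ->
  Ex P (fun x => (a - f x) ^+ 2) = a ^+ 2 - 2 * a * Ex P f + Ex P (fun x => f x ^+ 2).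
Proof.
move=> Lf.
have -> : Ex P (fun x => (a - f x) ^+ 2) =
   Ex P (fun x => (a ^+ 2 - (2 * a) * f x) + f x ^+ 2).
  by apply: eq_Ex => x; rewrite sqrrB; ring.
rewrite ExD; last 2 first.
- by apply: I1B; [exact: I1_cst| apply: I1Z; exact: L2_I1].
- exact: L2_I1sq.
rewrite ExB; [|exact: I1_cst| apply: I1Z; exact: L2_I1].
by rewrite Ex_cst ExZ //; exact: L2_I1.
Qed.

Lemma VarE f : L2 f -> Var P f = Ex P (fun x => f x ^+ 2) - Ex P f ^+ 2.
Proof.
move=> Lf; rewrite /Var.
rewrite (eq_Ex (g := fun x => (Ex P f - f x) ^+ 2)); last first.
  by move=> x; rewrite -sqrrN opprB.
rewrite ExSq //; ring.
Qed.

Lemma Var_decomp a f : L2 f ->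
  Ex P (fun x => (a - f x) ^+ 2) = (a - Ex P f) ^+ 2 + Var P f.
Proof. move=> Lf; rewrite ExSq // VarE //; ring. Qed.

Lemma Jensen2 f : L2 f -> Ex P f ^+ 2 <= Ex P (fun x => f x ^+ 2).
Proof.
move=> Lf; rewrite -subr_ge0 -VarE //; apply: Ex_ge0 => x; exact: sqr_ge0.
Qed.

Lemma Ex_fin f : I1 f -> (\int[P]_x (f x)%:E)%E = (Ex P f)%:E.
Proof. by move=> If; rewrite /Ex /Rintegral fineK //; exact: integrable_fin_num. Qed.

Lemma ExSqB f g : L2 f -> L2 g ->
  Ex P (fun x => (f x - g x) ^+ 2) =
  Ex P (fun x => f x ^+ 2) - 2 * Ex P (fun x => f x * g x) + Ex P (fun x => g x ^+ 2).
Proof.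
move=> Lf Lg.
have -> : Ex P (fun x => (f x - g x) ^+ 2) =
   Ex P (fun x => (f x ^+ 2 - 2 * (f x * g x)) + g x ^+ 2).
  by apply: eq_Ex => x; rewrite sqrrB; ring.
have Ifg := L2_mul Lf Lg.
rewrite ExD; last 2 first.
- by apply: I1B; [exact: L2_I1sq| apply: I1Z].
- exact: L2_I1sq.
by rewrite ExB; [rewrite ExZ| exact: L2_I1sq| apply: I1Z].
Qed.

Lemma L2_bounded f M : measurable_fun setT f -> (forall x, `|f x| <= M) -> L2 f.
Proof.
move=> mf fM; split => //; apply: (I1_le (g := fun _ => M ^+ 2)).
- exact: measurable_funX.
- exact: I1_cst.
move=> x; rewrite ger0_norm ?sqr_ge0 // ger0_norm ?sqr_ge0 //.
rewrite -real_normK ?num_real //; have := fM x; have := normr_ge0 (f x); nra.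
Qed.

Lemma I1_meas f : I1 f -> measurable_fun setT f.
Proof. by move=> /integrableP[/measurable_EFinP]. Qed.

Lemma Ex_ae f g : measurable_fun setT f -> measurable_fun setT g ->
  (\forall x \ae P, f x = g x) -> Ex P f = Ex P g.
Proof.
move=> mf mg H; rewrite /Ex /Rintegral.
rewrite (ae_eq_integral (fun x => (g x)%:E)) //.
- exact/measurable_EFinP.
- exact/measurable_EFinP.
- by apply: filterS H => x Hx _; rewrite Hx.
Qed.

Lemma I1_ae_le f g : measurable_fun setT f -> I1 g -> (forall x, 0 <= f x) ->
  (\forall x \ae P, f x <= g x) -> I1 f.
Proof.
move=> mf Ig f0 H; apply/integrableP; split; first exact/measurable_EFinP.
have mg := I1_meas Ig.
apply: (le_lt_trans _ (integrableP _ _ _ Ig).2).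
apply: ae_ge0_le_integral => //.
- by apply: measurableT_comp => //; exact/measurable_EFinP.
- by apply: measurableT_comp => //; exact/measurable_EFinP.
- apply: filterS H => x Hx _; rewrite !abse_EFin lee_fin ger0_norm ?f0 //.
  by rewrite (le_trans Hx) // ler_norm.
Qed.

End Basic.

Lemma fine_abse_le {R : realType} (e : \bar R) : (`|(fine e)%:E| <= `|e|)%E.
Proof. by case: e => [r| |] /=; rewrite ?leey ?lexx. Qed.

Section Trunc.
Context {R : realType} {dT : measure_display} {S : measurableType dT}.

Definition tr (h : S -> R) (n : nat) (t : S) : R :=
  h t * (\1_[set t | `|h t| <= n%:R] t : R).

Lemma tr_val h n t : tr h n t = if `|h t| <= n%:R then h t else 0.
Proof.
rewrite /tr indicE; have [H|H] := boolP (`|h t| <= n%:R).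
  by rewrite mem_set // mulr1.
by rewrite memNset ?mulr0 //= => /= H'; move/negP: H; apply.
Qed.

Lemma tr_meas h n : measurable_fun setT h -> measurable_fun setT (tr h n).
Proof.
move=> mh; apply: measurable_funM => //; apply: measurable_indic.
have -> : [set t | `|h t| <= n%:R] = setT `&` h @^-1` `[- n%:R, n%:R]%classic.
  apply/seteqP; split => t /=.
    by move=> H; split => //; rewrite in_itv /= -ler_norml.
  by move=> [_]; rewrite in_itv /= -ler_norml.
exact: mh.
Qed.

Lemma tr_bound h n t : `|tr h n t| <= n%:R.
Proof. by rewrite tr_val; case: ifP => // _; rewrite normr0. Qed.

Lemma tr_le h n t : `|tr h n t| <= `|h t|.
Proof. by rewrite tr_val; case: ifP => // _; rewrite normr0. Qed.

Lemma tr_sq h n t : h t * tr h n t = tr h n t ^+ 2.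
Proof. by rewrite tr_val; case: ifP => _; rewrite ?mulr0 ?expr2 // mul0r. Qed.

Lemma tr_mono h t : {homo (fun n => ((tr h n t) ^+ 2)%:E : \bar R) :
  n m / (n <= m)%N >-> (n <= m)%E}.
Proof.
move=> n m nm; rewrite lee_fin !tr_val.
case: ifP => Hn; case: ifP => Hm //.
- by move: Hm; rewrite (le_trans Hn) // ler_nat.
- by rewrite expr0n /= sqr_ge0.
Qed.

Lemma tr_near h t : \forall n \near \oo, tr h n t = h t.
Proof.
have /ltW Hb := archi_boundP (normr_ge0 (h t)).
exists (Num.Def.archi_bound `|h t|) => // n /= Nn.
rewrite tr_val (le_trans Hb) // ler_nat //.
Qed.

End Trunc.


Section CE.
Context {R : realType} {d : measure_display} {T : measurableType d}
  (P : probability T R) {dS : measure_display} {S : measurableType dS}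
  (X : T -> R) (Y : T -> S) (g : S -> R).
Hypotheses (mY : measurable_fun setT Y) (LX : L2 P X)
  (ce : cond_exp_version P X Y g).

Let mg : measurable_fun setT g. Proof. by case: ce. Qed.
Let hce := let: And3 _ _ h := ce in h.

Let ce_tr h n : measurable_fun setT h ->
  (\int[P]_w (X w * tr h n (Y w))%:E = \int[P]_w (g (Y w) * tr h n (Y w))%:E)%E.
Proof.
move=> mh; apply: hce; first exact: tr_meas.
by exists n%:R => t; exact: tr_bound.
Qed.

Lemma ce_L2 : L2 P (fun w => g (Y w)).
Proof.
have mG : measurable_fun setT (fun w => g (Y w)) := measurableT_comp mg mY.
split => //.
apply/integrableP; split; first exact/measurable_EFinP/(measurable_funX 2 mG).
rewrite (eq_integral (fun w => ((g (Y w)) ^+ 2)%:E)); last first.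
  by move=> w _; rewrite abse_EFin ger0_norm // sqr_ge0.
pose g' n w := ((tr g n (Y w)) ^+ 2)%:E : \bar R.
have mg' n : measurable_fun setT (g' n).
  by apply/measurable_EFinP/(measurable_funX 2)/measurableT_comp => //; exact: tr_meas.
have L2n n : L2 P (fun w => tr g n (Y w)).
  apply: (@L2_bounded R d T P _ n%:R); last by move=> x; exact: tr_bound.
  by apply: measurableT_comp => //; exact: tr_meas.
have key n : (\int[P]_w g' n w <= (Ex P (fun w => X w ^+ 2))%:E)%E.
  rewrite Ex_fin; last exact: L2_I1sq.
  rewrite lee_fin.
  have H := ce_tr n mg.
  have E1 : Ex P (fun w => X w * tr g n (Y w)) = Ex P (fun w => tr g n (Y w) ^+ 2).
    rewrite /Ex /Rintegral H; congr fine; apply: eq_integral => w _.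
    by rewrite tr_sq.
  have := ExSqB LX (L2n n); rewrite E1.
  have := Ex_ge0 P (fun w => sqr_ge0 (X w - tr g n (Y w))).
  lra.
have lim w : limn (g'^~ w) = ((g (Y w)) ^+ 2)%:E.
  apply: lim_near_cst => //; near=> n.
  by rewrite /g' (near (tr_near g (Y w)) n).
have g'0 : forall n x, setT x -> (0 <= g' n x)%E.
  by move=> n x _; rewrite lee_fin sqr_ge0.
have H := cvg_monotone_convergence (mu := P) measurableT (fun n => mg' n) g'0
  (fun x _ => tr_mono g (Y x)).
rewrite (eq_integral (fun w => limn (g'^~ w))); last by move=> w _; rewrite lim.
rewrite -(cvg_lim _ H) //.
have Hle : (limn (fun n => \int[P]_w g' n w) <= (Ex P (fun w => X w ^+ 2))%:E)%E.
  by apply: lime_le; [exact: cvgP H| exact: nearW key].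
exact: le_lt_trans Hle (ltry _).
Unshelve. all: end_near.
Qed.

Section ext.
Variable h : S -> R.
Hypotheses (mh : measurable_fun setT h) (Lh : L2 P (fun w => h (Y w))).

Let dct (Z : T -> R) : L2 P Z ->
  (fun n => \int[P]_w (Z w * tr h n (Y w))%:E)%E @ \oo --> (\int[P]_w (Z w * h (Y w))%:E)%E.
Proof.
move=> LZ.
have mZ := L2_meas LZ.
have mf_ : forall n, measurable_fun setT (fun w => (Z w * tr h n (Y w))%:E).
  move=> n; apply/measurable_EFinP; apply: measurable_funM => //.
  by apply: measurableT_comp => //; exact: tr_meas.
have mf : measurable_fun setT (fun w => (Z w * h (Y w))%:E).
  apply/measurable_EFinP; apply: measurable_funM => //.
  exact: measurableT_comp.
have conv : (\forall x \ae P, setT x ->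
    (fun w => (Z w * tr h n (Y w))%:E) x @[n --> \oo] --> (Z x * h (Y x))%:E).
  apply: aeW => w _; apply: cvg_near_cst; near=> n.
  by rewrite (near (tr_near h (Y w)) n).
have int : P.-integrable setT (abse \o (fun w => (Z w * h (Y w))%:E)).
  exact/integrable_abse/(L2_mul LZ Lh).
have bnd : (\forall x \ae P, forall n, setT x ->
    (`|(fun w => (Z w * tr h n (Y w))%:E) x| <= (abse \o (fun w => (Z w * h (Y w))%:E)) x)%E).
  have hb : forall w n, `|Z w * tr h n (Y w)| <= `|Z w * h (Y w)|.
    by move=> w n; rewrite normrM [X in _ <= X]normrM ler_wpM2l //; exact: tr_le.
  by apply: aeW => w n _ /=; rewrite lee_fin; exact: hb.
by case: (dominated_convergence measurableT mf_ mf conv int bnd).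
Unshelve. all: end_near.
Qed.

Lemma ce_ext : Ex P (fun w => X w * h (Y w)) = Ex P (fun w => g (Y w) * h (Y w)).
Proof.
have H1 := dct LX.
have H2 := dct ce_L2.
have E : (fun n => \int[P]_w (X w * tr h n (Y w))%:E)%E =
         (fun n => \int[P]_w (g (Y w) * tr h n (Y w))%:E)%E.
  by apply: funext => n; apply: ce_tr.
rewrite E in H1.
by rewrite /Ex /Rintegral (cvg_unique _ H1 H2).
Qed.

End ext.
End CE.


Section MeasEx.
Context {R : realType} {d1 : measure_display} {T1 : measurableType d1}
  {dX : measure_display} {X : measurableType dX} (Q : probability X R).

Lemma meas_Ex (F : T1 * X -> R) : measurable_fun setT F ->
  measurable_fun setT (fun t => Ex Q (fun x => F (t, x))).
Proof.
move=> mF.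
have mFe : measurable_fun setT (EFin \o F) by exact/measurable_EFinP.
have mp := measurable_fun_fubini_tonelli_F (m2 := Q) _ (measurable_funepos mFe)
  (funepos_ge0 _).
have mn := measurable_fun_fubini_tonelli_F (m2 := Q) _ (measurable_funeneg mFe)
  (funeneg_ge0 _).
have -> : (fun t => Ex Q (fun x => F (t, x))) = fun t =>
    fine (fubini_F Q (EFin \o F)^\+ t - fubini_F Q (EFin \o F)^\- t)%E.
  apply: funext => t; rewrite /Ex /Rintegral integralE /fubini_F.
  by congr (fine (_ - _)); apply: eq_integral => x _; rewrite ?funeposE ?funenegE.
exact: measurableT_comp (fine_measurable measurableT) (emeasurable_funB mp mn).
Qed.

End MeasEx.

Section Est.
Context {R : realType} {dO : measure_display} {O : measurableType dO}
  (P0 : probability O R)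
  {dX : measure_display} {X : measurableType dX} (Q : probability X R)
  {dS : measure_display} {S : measurableType dS} (Y : O -> S) (G : X -> S -> R).
Hypotheses (mY : measurable_fun setT Y)
  (mG : measurable_fun setT (fun p : X * S => G p.1 p.2))
  (iG : (P0 \x Q)%E.-integrable setT (fun p => ((G p.2 (Y p.1)) ^+ 2)%:E)).

Definition mh s := Ex Q (fun x => G x s).

Let mGs : measurable_fun setT (fun p : S * X => G p.2 p.1).
Proof.
exact: measurableT_comp mG (measurable_fun_pair measurable_snd measurable_fst).
Qed.

Lemma mh_meas : measurable_fun setT mh.
Proof. exact: (meas_Ex Q mGs). Qed.

Let mGY : measurable_fun setT (fun p : O * X => G p.2 (Y p.1)).
Proof.
apply: measurableT_comp mG (measurable_fun_pair measurable_snd _).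
exact: measurableT_comp mY measurable_fst.
Qed.

Let aeL2 : \forall z \ae P0, L2 Q (fun x => G x (Y z)).
Proof.
have := ae_integrable1 iG; apply: filterS => z Hz; split => //.
exact: (measurable_fun_pair2 z mGY).
Qed.

Let s2 z := Ex Q (fun x => G x (Y z) ^+ 2).

Let s2_I1 : I1 P0 s2.
Proof.
have iF := integrable_fubini_F iG.
have mF := measurable_fubini_F iG.
apply: (le_integrable measurableT _ _ iF).
  apply/measurable_EFinP.
  exact: measurableT_comp (fine_measurable measurableT) mF.
move=> z _; exact: (fine_abse_le (fubini_F Q _ z)).
Qed.

Lemma mhY_L2 : L2 P0 (fun z => mh (Y z)).
Proof.
have mmY : measurable_fun setT (fun z => mh (Y z)) := measurableT_comp mh_meas mY.
split => //.
apply: (I1_ae_le (g := s2)).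
- exact: measurable_funX.
- exact: s2_I1.
- by move=> z; exact: sqr_ge0.
- apply: filterS aeL2 => z Lz; exact: Jensen2.
Qed.

Lemma est_decomp (y : O -> R) : L2 P0 y ->
  Ex P0 (fun z => Ex Q (fun x => (y z - G x (Y z)) ^+ 2)) =
  Ex P0 (fun z => (y z - mh (Y z)) ^+ 2) + Ex P0 (fun z => Var Q (fun x => G x (Y z))).
Proof.
move=> Ly.
have LmY := mhY_L2.
have mmY1 : measurable_fun setT (fun p : O * X => mh (Y p.1)).
  exact: measurableT_comp (L2_meas LmY) measurable_fst.
have mV : measurable_fun setT (fun z => Var Q (fun x => G x (Y z))).
  apply: (meas_Ex Q (F := fun p => (G p.2 (Y p.1) - mh (Y p.1)) ^+ 2)).
  exact/measurable_funX/measurable_funB.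
have mA : measurable_fun setT (fun z => Ex Q (fun x => (y z - G x (Y z)) ^+ 2)).
  apply: (meas_Ex Q (F := fun p => (y p.1 - G p.2 (Y p.1)) ^+ 2)).
  apply/measurable_funX/measurable_funB => //.
  exact: measurableT_comp (L2_meas Ly) measurable_fst.
have ms2 := I1_meas s2_I1.
have I2 : I1 P0 (fun z => s2 z - mh (Y z) ^+ 2).
  exact: I1B s2_I1 (L2_I1sq LmY).
have I3 : I1 P0 (fun z => (y z - mh (Y z)) ^+ 2).
  exact: L2_I1sq (L2B Ly LmY).
have EV : Ex P0 (fun z => Var Q (fun x => G x (Y z))) =
          Ex P0 (fun z => s2 z - mh (Y z) ^+ 2).
  apply: Ex_ae; [exact: mV| exact: I1_meas I2|].
  by apply: filterS aeL2 => z Lz; rewrite VarE.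
have EA : Ex P0 (fun z => Ex Q (fun x => (y z - G x (Y z)) ^+ 2)) =
    Ex P0 (fun z => (y z - mh (Y z)) ^+ 2 + (s2 z - mh (Y z) ^+ 2)).
  apply: Ex_ae; [exact: mA| exact: I1_meas (I1D I3 I2)|].
  by apply: filterS aeL2 => z Lz; rewrite Var_decomp // VarE.
by rewrite EA EV (ExD I3 I2).
Qed.

End Est.

Unset Implicit Arguments.
Set Strict Implicit.

Theorem corollary1 (R : realType)
  (dS : measure_display) (TS : measurableType dS)
  (D : probability ((TS * R) * TS)%type R)
  (dN : measure_display) (XN : measurableType dN) (PN : probability XN R)
  (dM : measure_display) (XM : measurableType dM) (PM : probability XM R)
  (muhat : XN -> TS -> R) (xihat : XM -> TS -> TS -> R)
  (mubar : TS -> R) (xibar : TS * TS -> R) (c v : TS -> R) :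
  D.-integrable setT (fun z => (z.1.2 ^+ 2)%:E) ->
  measurable_fun setT (fun p : XN * TS => muhat p.1 p.2) ->
  (D \x PN)%E.-integrable setT (fun p => ((muhat p.2 p.1.1.1) ^+ 2)%:E) ->
  measurable_fun setT (fun p : XM * (TS * TS) => xihat p.1 p.2.1 p.2.2) ->
  (D \x PM)%E.-integrable setT (fun p => ((xihat p.2 p.1.1.1 p.1.2) ^+ 2)%:E) ->
  cond_exp_version D (fun z => z.1.2) (fun z => z.1.1) mubar ->
  cond_exp_version D (fun z => z.1.2) (fun z => (z.1.1, z.2)) xibar ->
  cond_exp_version D (fun z => xibar (z.1.1, z.2)) (fun z => z.1.1) c ->
  cond_exp_version D (fun z => (xibar (z.1.1, z.2) - c z.1.1) ^+ 2) (fun z => z.1.1) v ->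
  let EPE_mu := Ex D (fun z => Ex PN (fun d => (z.1.2 - muhat d z.1.1) ^+ 2)) in
  let EPE_xi := Ex D (fun z => Ex PM (fun d => (z.1.2 - xihat d z.1.1 z.2) ^+ 2)) in
  let Delta := Ex D (fun z => v z.1.1) in
  let delta := Ex D (fun z => Var PN (fun d => muhat d z.1.1))
             - Ex D (fun z => Var PM (fun d => xihat d z.1.1 z.2)) in
  let b2_mu := Ex D (fun z => (Ex PN (fun d => muhat d z.1.1) - mubar z.1.1) ^+ 2) in
  let b2_xi := Ex D (fun z => (Ex PM (fun d => xihat d z.1.1 z.2) - xibar (z.1.1, z.2)) ^+ 2) in
  let beta := b2_mu - b2_xi in
  EPE_mu - EPE_xi = Delta + delta + beta.
Proof.
move=> ia2 mmu imu mxi ixi cemu cexi cec cev.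
move=> EPE_mu EPE_xi Delta delta b2_mu b2_xi beta.
rewrite /EPE_mu /EPE_xi /Delta /delta /beta /b2_mu /b2_xi.
pose Om := ((TS * R) * TS)%type.
have mY1 : measurable_fun setT (fun z : Om => z.1.1).
  exact: measurableT_comp measurable_fst measurable_fst.
have mY2 : measurable_fun setT (fun z : Om => (z.1.1, z.2)).
  exact: measurable_fun_pair mY1 measurable_snd.
have La : L2 D (fun z : Om => z.1.2).
  split => //; exact: measurableT_comp measurable_snd measurable_fst.
pose Gx := fun (d : XM) (s : TS * TS) => xihat d s.1 s.2.
have d1 : Ex D (fun z => Ex PN (fun d => (z.1.2 - muhat d z.1.1) ^+ 2)) =
    Ex D (fun z => (z.1.2 - Ex PN (fun d => muhat d z.1.1)) ^+ 2) +
    Ex D (fun z => Var PN (fun d => muhat d z.1.1)).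
  exact: (est_decomp (Y := fun z : Om => z.1.1) mY1 mmu imu La).
have d2 : Ex D (fun z => Ex PM (fun d => (z.1.2 - xihat d z.1.1 z.2) ^+ 2)) =
    Ex D (fun z => (z.1.2 - Ex PM (fun d => xihat d z.1.1 z.2)) ^+ 2) +
    Ex D (fun z => Var PM (fun d => xihat d z.1.1 z.2)).
  exact: (est_decomp (Y := fun z : Om => (z.1.1, z.2)) (G := Gx) mY2 mxi ixi La).
have Lm : L2 D (fun z : Om => Ex PN (fun d => muhat d z.1.1)).
  exact: (mhY_L2 (Y := fun z : Om => z.1.1) mY1 mmu imu).
have Lm' : L2 D (fun z : Om => Ex PM (fun d => xihat d z.1.1 z.2)).
  exact: (mhY_L2 (Y := fun z : Om => (z.1.1, z.2)) (G := Gx) mY2 mxi ixi).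
have mm : measurable_fun setT (fun s => Ex PN (fun d => muhat d s)).
  exact: (mh_meas PN mmu).
have mm' : measurable_fun setT (fun s : TS * TS => Ex PM (fun d => xihat d s.1 s.2)).
  exact: (mh_meas PM (G := Gx) mxi).
have Lmb : L2 D (fun z : Om => mubar z.1.1) := ce_L2 mY1 La cemu.
have Lxb : L2 D (fun z : Om => xibar (z.1.1, z.2)) := ce_L2 mY2 La cexi.
have Lc : L2 D (fun z : Om => c z.1.1) := ce_L2 mY1 Lxb cec.
have mmb : measurable_fun setT mubar by case: cemu.
have mc : measurable_fun setT c by case: cec.
have mmb1 : measurable_fun setT (fun s : TS * TS => mubar s.1).
  exact: measurableT_comp mmb measurable_fst.
have mc1 : measurable_fun setT (fun s : TS * TS => c s.1).
  exact: measurableT_comp mc measurable_fst.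
have swap (f g : Om -> R) : Ex D (fun z => f z * g z) = Ex D (fun z => g z * f z).
  by apply: eq_Ex => z; rewrite mulrC.
have sq (f : Om -> R) : Ex D (fun z => f z ^+ 2) = Ex D (fun z => f z * f z).
  by apply: eq_Ex => z; rewrite expr2.
have e1 := ExSqB La Lm.
have e2 := ExSqB La Lm'.
have e3 := ExSqB Lm Lmb.
have e4 := ExSqB Lm' Lxb.
have e5 := ExSqB Lxb Lc.
have c1 : Ex D (fun z => z.1.2 * Ex PN (fun d => muhat d z.1.1)) =
          Ex D (fun z => mubar z.1.1 * Ex PN (fun d => muhat d z.1.1)).
  exact: (ce_ext mY1 La cemu mm Lm).
have c2 : Ex D (fun z => z.1.2 * Ex PM (fun d => xihat d z.1.1 z.2)) =
          Ex D (fun z => xibar (z.1.1, z.2) * Ex PM (fun d => xihat d z.1.1 z.2)).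
  exact: (ce_ext mY2 La cexi mm' Lm').
have c3 : Ex D (fun z => z.1.2 * mubar z.1.1) = Ex D (fun z => mubar z.1.1 * mubar z.1.1).
  exact: (ce_ext mY1 La cemu mmb Lmb).
have c4 : Ex D (fun z => z.1.2 * mubar z.1.1) =
          Ex D (fun z => xibar (z.1.1, z.2) * mubar z.1.1).
  exact: (ce_ext mY2 La cexi mmb1 Lmb).
have c5 : Ex D (fun z => xibar (z.1.1, z.2) * mubar z.1.1) =
          Ex D (fun z => c z.1.1 * mubar z.1.1).
  exact: (ce_ext mY1 Lxb cec mmb Lmb).
have c6 : Ex D (fun z => z.1.2 * c z.1.1) = Ex D (fun z => mubar z.1.1 * c z.1.1).
  exact: (ce_ext mY1 La cemu mc Lc).
have c7 : Ex D (fun z => z.1.2 * c z.1.1) = Ex D (fun z => xibar (z.1.1, z.2) * c z.1.1).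
  exact: (ce_ext mY2 La cexi mc1 Lc).
have c8 : Ex D (fun z => xibar (z.1.1, z.2) * c z.1.1) = Ex D (fun z => c z.1.1 * c z.1.1).
  exact: (ce_ext mY1 Lxb cec mc Lc).
have v1 : Ex D (fun z => (xibar (z.1.1, z.2) - c z.1.1) ^+ 2) = Ex D (fun z => v z.1.1).
  case: cev => _ _ hv.
  have b1 : exists M : R, forall t : TS, `|(fun=> 1 : R) t| <= M.
    by exists 1 => t; rewrite normr1.
  have := hv (fun _ => 1) (measurable_cst _) b1.
  under eq_integral do rewrite mulr1.
  under [X in (_ = X)%E -> _]eq_integral do rewrite mulr1.
  by rewrite /Ex /Rintegral => ->.
rewrite d1 d2 -v1 e1 e2 e3 e4 e5.
rewrite (sq (fun z => mubar z.1.1)) (sq (fun z => c z.1.1)).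
rewrite (swap (fun z => Ex PN (fun d => muhat d z.1.1))).
rewrite (swap (fun z => Ex PM (fun d => xihat d z.1.1 z.2))).
rewrite (swap (fun z => mubar z.1.1) (fun z => c z.1.1)) in c6.

lra.
Qed.
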